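(* Let $(F; +, \cdot, <)$ be an ordered field such that $T = \mathrm{Th}(F;+,\cdot,<)$ is dp-small. Then every positive element of $F$ has an $n$th root in $F$ for every positive integer $n$.
   Context: For a complete theory $T$ in language $L$ with monster model $\mathcal{U}$ ($\mathcal{U}_y$ the $|y|$-tuples from $\mathcal{U}$): a partial type $\pi(x)$ is dp-small if there do not exist $L(\mathcal{U})$-formulas $\varphi_i(x)$ ($i<\omega$), an $L$-formula $\psi(x;y)$ and $b_j\in\mathcal{U}_y$ ($j<\omega$) such that for all $i_0,j_0<\omega$ the type $\pi(x)\cup\{\varphi_{i_0}(x),\psi(x;b_{j_0})\}\cup\{\neg\varphi_i(x): i\ne i_0\}\cup\{\neg\psi(x;b_j): j\neq j_0\}$ is consistent. $T$ is dp-small if $x=x$ is dp-small for $x$ a single variable. *)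

(* Defs.v *)
From mathcomp Require Import all_boot all_order all_algebra.
Set Implicit Arguments. Unset Strict Implicit. Unset Printing Implicit Defensive.
Import Order.TTheory GRing.Theory Num.Theory.

Record Lstruct := LStruct {
  car :> Type;
  s_add : car -> car -> car;
  s_mul : car -> car -> car;
  s_lt  : car -> car -> Prop }.

Inductive term : Type :=
  | TVar of nat
  | TAdd of term & term
  | TMul of term & term.

Inductive formula : Type :=
  | FEq  of term & term
  | FLt  of term & term
  | FNeg of formula
  | FAnd of formula & formula
  | FEx  of nat & formula.

Definition upd (M : Type) (e : nat -> M) (n : nat) (a : M) : nat -> M :=
  fun k => if k == n then a else e k.

Fixpoint teval (M : Lstruct) (e : nat -> M) (t : term) : M :=
  match t with
  | TVar n => e n
  | TAdd t1 t2 => s_add (teval e t1) (teval e t2)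
  | TMul t1 t2 => s_mul (teval e t1) (teval e t2)
  end.

Fixpoint sat (M : Lstruct) (e : nat -> M) (f : formula) : Prop :=
  match f with
  | FEq t1 t2 => teval e t1 = teval e t2
  | FLt t1 t2 => s_lt (teval e t1) (teval e t2)
  | FNeg g => ~ sat e g
  | FAnd g h => sat e g /\ sat e h
  | FEx n g => exists a : M, sat (upd e n a) g
  end.

Fixpoint tfv (t : term) : seq nat :=
  match t with
  | TVar n => [:: n]
  | TAdd t1 t2 => tfv t1 ++ tfv t2
  | TMul t1 t2 => tfv t1 ++ tfv t2
  end.

Fixpoint fv (f : formula) : seq nat :=
  match f with
  | FEq t1 t2 => tfv t1 ++ tfv t2
  | FLt t1 t2 => tfv t1 ++ tfv t2
  | FNeg g => fv g
  | FAnd g h => fv g ++ fv h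
  | FEx n g => [seq k <- fv g | k != n]
  end.

Definition sentence (f : formula) : Prop := fv f = [::].

Definition struct_of (R : realFieldType) : Lstruct :=
  @LStruct R (fun x y => x + y)%R (fun x y => x * y)%R (fun x y => (x < y)%R).

(* M (nonempty, witnessed by m0) is a model of Th(F), i.e. M is elementarily
   equivalent to F. *)
Definition models_Th (R : realFieldType) (M : Lstruct) (m0 : M) : Prop :=
  forall f : formula, sentence f ->
    (sat (M := struct_of R) (fun _ => 0%R) f <-> sat (fun _ => m0) f).

(* A dp-small witness configuration in a model M of T: L(M)-formulas
   phi_i(x) (formula phi i, parameters pe i for the variables other than x = 0),
   an L-formula psi(x;y) and parameter tuples b_j (valuations of the y-variables),
   such that every type
     {phi_i0(x), psi(x;b_j0)} u {~phi_i(x) : i <> i0} u {~psi(x;b_j) : j <> j0}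
   is consistent with the elementary diagram of M, i.e. finitely satisfiable in M. *)
Definition dp_config (M : Lstruct) : Prop :=
  exists (phi : nat -> formula) (pe : nat -> nat -> M)
         (psi : formula) (b : nat -> nat -> M),
    forall i0 j0 N : nat, exists a : M,
      [/\ sat (upd (pe i0) 0 a) (phi i0),
          sat (upd (b j0) 0 a) psi,
          (forall i, (i < N)%N -> i <> i0 -> ~ sat (upd (pe i) 0 a) (phi i)) &
          (forall j, (j < N)%N -> j <> j0 -> ~ sat (upd (b j) 0 a) psi)].

(* Th(F; +, *, <) is dp-small: no model of the theory carries such a
   configuration (equivalently, the monster model does not). *)
Definition dp_small_Th (R : realFieldType) : Prop :=
  forall (M : Lstruct) (m0 : M), models_Th R m0 -> ~ dp_config M.

(* Main.v *)
Require Import Defs.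
From mathcomp Require Import all_boot all_order all_algebra.
From mathcomp Require Import boolp classical_sets filter.
Import Order.TTheory GRing.Theory Num.Theory.
Set Implicit Arguments. Unset Strict Implicit. Unset Printing Implicit Defensive.
Local Open Scope ring_scope.
Local Open Scope classical_set_scope.
From mathcomp Require Import zify.
Fixpoint tpowS (t : term) (k : nat) : term :=
  match k with 0 => t | k'.+1 => TMul (tpowS t k') t end.
Definition isPow k := FEx 1 (FEq (TVar 0) (tpowS (TVar 1) k.-1)).
Definition phiF n i := FAnd (isPow (n ^ i)) (FNeg (isPow (n ^ i.+1))).
Definition psiF := FAnd (FLt (TVar 1) (TVar 0)) (FLt (TVar 0) (TVar 2)).

Lemma teval_tpowS (F : realFieldType) (e : nat -> F) t k :
  teval (M := struct_of F) e (tpowS t k) = teval (M := struct_of F) e t ^+ k.+1.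
Proof. elim: k => [|k IH] /=; first by rewrite expr1. by rewrite IH -exprSr. Qed.

Lemma sat_isPow (F : realFieldType) (e : nat -> F) k : (0 < k)%N ->
  sat (M := struct_of F) e (isPow k) <-> exists y : F, e 0%N = y ^+ k.
Proof.
move=> k0; rewrite /isPow /=; split=> -[y Hy]; exists y; move: Hy;
  by rewrite teval_tpowS prednK //= /upd /=.
Qed.

Section Alg.
Variable F : realFieldType.
Variables (c : F) (n : nat).
Hypothesis Hc : 1 < c.
Hypothesis Hn : (1 < n)%N.
Hypothesis Hno : forall y : F, y ^+ n != c.

Lemma powchar j0 i0 N k : (i0 < N)%N ->
  (exists y, c ^+ (j0 * n ^ N + n ^ i0) = y ^+ (n ^ k)) <-> (k <= i0)%N.
Proof.
move=> iN; split; last first.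
  move=> ki; exists (c ^+ (j0 * n ^ (N - k) + n ^ (i0 - k))); rewrite -exprM.
  congr (c ^+ _); rewrite mulnDl -mulnA -!expnD !subnK //.
  exact: leq_trans ki (ltnW iN).
move=> [y Hy]; rewrite leqNgt; apply/negP => ik.
have c0 : 0 < c by apply: lt_trans Hc.
set m := i0.+1.
have ekm : (n ^ k = n ^ (k - m) * n ^ m)%N by rewrite -expnD subnK.
have eNm : (j0 * n ^ N = j0 * n ^ (N - m) * n ^ m)%N by rewrite -mulnA -expnD subnK.
set w := y ^+ (n ^ (k - m)).
set d := c ^+ (j0 * n ^ (N - m)).
have d0 : d != 0 by rewrite expf_neq0 // gt_eqF.
have E : (w / d) ^+ (n ^ m) = c ^+ (n ^ i0).
  rewrite expr_div_n /w -exprM -ekm -Hy exprD eNm exprM -/d.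
  by rewrite mulrC mulKf // expf_neq0.
move: E; rewrite expnS exprM => E.
have : `|(w / d) ^+ n| = c.
  apply/eqP; rewrite -(@eqrXn2 _ (n ^ i0)) ?expn_gt0 ?(ltnW Hn) //.
    by rewrite -normrX E ger0_norm // exprn_ge0 // ltW.
  exact: ltW.
rewrite normrX => Ec.
by move: (Hno `|w / d|); rewrite Ec eqxx.
Qed.

End Alg.

Section Ultra.
Variable F : realFieldType.
Variable U : set_system nat.
Hypothesis UU : UltraFilter U.
#[local] Instance UPF0 : ProperFilter U := @ultra_proper _ _ UU.
#[local] Instance UF : Filter U := UPF0.

Definition ueq (f g : nat -> F) := U [set N | f N = g N].
Definition cls (f : nat -> F) : (nat -> F) -> Prop := fun g => ueq f g.
Definition Mcar := {A : (nat -> F) -> Prop | exists f, A = cls f}.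
Definition mk (f : nat -> F) : Mcar := exist _ (cls f) (ex_intro _ f erefl).
Definition rep (x : Mcar) : nat -> F := projT1 (cid (proj2_sig x)).

Lemma mk_rep x : mk (rep x) = x.
Proof.
rewrite /rep; case: cid => f Hf; case: x Hf => A HA /= Hf; subst A.
rewrite /mk; f_equal; exact: Prop_irrelevance.
Qed.

Lemma ueq_refl f : ueq f f.
Proof. by apply: filterS filterT => N. Qed.
Lemma ueq_sym f g : ueq f g -> ueq g f.
Proof. by apply: filterS => N. Qed.
Lemma ueq_trans f g h : ueq f g -> ueq g h -> ueq f h.
Proof. move=> H1 H2; apply: filterS (filterI H1 H2) => N [] /= -> -> //. Qed.

Lemma exist_eq (A B : (nat -> F) -> Prop) (pA : exists f, A = cls f)
  (pB : exists f, B = cls f) : A = B -> exist (fun X => exists f, X = cls f) A pA = exist (fun X => exists f, X = cls f) B pB.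
Proof. move=> AB; subst B; by rewrite (Prop_irrelevance pA pB). Qed.

Lemma mk_eq f g : mk f = mk g <-> ueq f g.
Proof.
split.
  move/(f_equal sval) => /= H; have : cls f f by exact: ueq_refl.
  by rewrite H => /ueq_sym.
move=> Hfg; have E : cls f = cls g.
  apply: funext => h; apply: propext; split => H.
    exact: (ueq_trans (ueq_sym Hfg) H).
  exact: (ueq_trans Hfg H).
rewrite /mk; apply: exist_eq; exact: E.
Qed.

Lemma rep_mk f : ueq (rep (mk f)) f.
Proof. by apply/mk_eq; rewrite mk_rep. Qed.

Definition Madd (x y : Mcar) := mk (fun N => rep x N + rep y N).
Definition Mmul (x y : Mcar) := mk (fun N => rep x N * rep y N).
Definition Mlt (x y : Mcar) : Prop := U [set N | rep x N < rep y N].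
Definition Mst := @LStruct Mcar Madd Mmul Mlt.

Lemma Madd_mk f g : Madd (mk f) (mk g) = mk (fun N => f N + g N).
Proof.
apply/mk_eq; apply: filterS (filterI (rep_mk f) (rep_mk g)) => N [/= -> ->] //.
Qed.
Lemma Mmul_mk f g : Mmul (mk f) (mk g) = mk (fun N => f N * g N).
Proof.
apply/mk_eq; apply: filterS (filterI (rep_mk f) (rep_mk g)) => N [/= -> ->] //.
Qed.
Lemma Mlt_mk f g : Mlt (mk f) (mk g) <-> U [set N | f N < g N].
Proof.
split=> H; apply: filterS (filterI H (filterI (rep_mk f) (rep_mk g))) => N [/=].
  by move=> + [<- <-].
by move=> + [-> ->].
Qed.

Lemma ultra_neg (A : set nat) : ~ U A <-> U [set N | ~ A N].
Proof.
split; first by case: (in_ultra_setVsetC A UU).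
move=> H1 H2; apply: (@filter_not_empty _ U UPF0).
suff <- : [set N | ~ A N] `&` A = set0 by exact: filterI.
by apply/seteqP; split=> N // [].
Qed.

Lemma teval_mk (E : nat -> nat -> F) t :
  teval (M := Mst) (fun k => mk (E k)) t =
  mk (fun N => teval (M := struct_of F) (fun k => E k N) t).
Proof.
elim: t => [k|t1 IH1 t2 IH2|t1 IH1 t2 IH2] //=; rewrite IH1 IH2.
  exact: Madd_mk.
exact: Mmul_mk.
Qed.

Lemma upd_mk (E : nat -> nat -> F) n h :
  upd (fun k => mk (E k)) n (mk h) = (fun k => mk (upd E n h k)).
Proof. by apply: funext => k; rewrite /upd; case: (k == n). Qed.

Lemma upd_pt (E : nat -> nat -> F) n h N :
  (fun k => upd E n h k N) = upd (fun k => E k N) n (h N).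
Proof. by apply: funext => k; rewrite /upd; case: (k == n). Qed.

Lemma los f : forall E : nat -> nat -> F,
  sat (M := Mst) (fun k => mk (E k)) f <->
  U [set N | sat (M := struct_of F) (fun k => E k N) f].
Proof.
elim: f => [t1 t2|t1 t2|g IH|g IHg h IHh|n g IH] E /=.
- by rewrite !teval_mk; exact: mk_eq.
- by rewrite !teval_mk; exact: Mlt_mk.
- by rewrite IH; exact: ultra_neg.
- rewrite IHg IHh; split; first by move=> [H1 H2]; exact: filterI.
  by move=> H; split; apply: filterS H => N [].
- split.
    move=> [a]; rewrite -(mk_rep a) upd_mk IH => H.
    by apply: filterS H => N /= H; exists (rep a N); rewrite -upd_pt.
  move=> H.
  pose P N a := sat (M := struct_of F) (upd (fun k => E k N) n a) g.
  pose h N := match pselect (exists a, P N a) with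
              | left H => projT1 (cid H) | right _ => 0 end.
  exists (mk h); rewrite upd_mk IH; apply: filterS H => N /= HN.
  rewrite upd_pt /h; case: pselect => [H|//]; exact: (projT2 (cid H)).
Qed.


Lemma los_upd (E : nat -> nat -> F) m h f :
  sat (M := Mst) (upd (fun k => mk (E k)) m (mk h)) f <->
  U [set N | sat (M := struct_of F) (upd (fun k => E k N) m (h N)) f].
Proof.
rewrite upd_mk los; split; apply: filterS => N /=; by rewrite upd_pt.
Qed.

Lemma ev (P : set nat) M0 : eventually `<=` U -> (forall N, (M0 <= N)%N -> P N) -> U P.
Proof. by move=> sub H; apply: sub; exists M0. Qed.

Variables (c : F) (n : nat).
Hypothesis Hc : 1 < c.
Hypothesis Hn : (1 < n)%N.
Hypothesis Hno : forall y : F, y ^+ n != c.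
Hypothesis sub : eventually `<=` U.

Definition Eb (j k : nat) : nat -> F := fun N =>
  if k == 1%N then c ^+ (j * n ^ N) else if k == 2%N then c ^+ (j.+1 * n ^ N) else 0.

Lemma config : dp_config Mst.
Proof.
exists (phiF n), (fun _ _ => mk (fun _ => 0)), psiF, (fun j k => mk (Eb j k)).
move=> i0 j0 NN.
pose A N := c ^+ (j0 * n ^ N + n ^ i0); exists (mk A).
have n0 : (0 < n)%N by apply: ltnW.
have pc := powchar Hc Hn Hno.
split.
- apply/(los_upd (fun _ _ => 0)); apply: (ev (M0 := i0.+1)) => // N iN /=.
  split.
    apply/sat_isPow; first by rewrite expn_gt0 n0.
    by rewrite /upd /= /A; apply/(pc j0 i0 N i0 iN).
  move/sat_isPow; rewrite expn_gt0 n0 /upd /= /A => /(_ isT).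
  by move/(pc j0 i0 N i0.+1 iN); rewrite ltnn.
- apply/(los_upd (fun j => Eb j0 j)); apply: (ev (M0 := i0.+1)) => // N iN /=.
  rewrite /upd /Eb /= /A !(ltr_eXn2l Hc).
  have r0 : (0 < n ^ i0)%N by rewrite expn_gt0 n0.
  have rK : (n ^ i0 < n ^ N)%N by rewrite ltn_exp2l.
  rewrite mulSn; split; lia.
- move=> i _ ii0.
  have := (los_upd (fun _ _ => 0) 0 A (FNeg (phiF n i))) => /= -[_]; apply.
  apply: (ev (M0 := i0.+1)) => // N iN /= [H1 H2].
  move/sat_isPow: H1; rewrite expn_gt0 n0 /upd /= /A => /(_ isT).
  move/(pc j0 i0 N i iN) => H1.
  apply: H2; apply/sat_isPow; first by rewrite expn_gt0 n0.
  rewrite /upd /= /A; apply/(pc j0 i0 N i.+1 iN); lia.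
- move=> j _ jj0.
  have := (los_upd (fun k => Eb j k) 0 A (FNeg psiF)) => /= -[_]; apply.
  apply: (ev (M0 := i0.+1)) => // N iN /=.
  rewrite /upd /Eb /= /A !(ltr_eXn2l Hc) => -[H1 H2].
  have r0 : (0 < n ^ i0)%N by rewrite expn_gt0 n0.
  have rK : (n ^ i0 < n ^ N)%N by rewrite ltn_exp2l.
  have [jl|jg|//] := ltngtP j j0.
    have : (j.+1 * n ^ N <= j0 * n ^ N)%N by rewrite leq_mul2r jl orbT.
    move: H2; rewrite mulSn; lia.
  have : (j0.+1 * n ^ N <= j * n ^ N)%N by rewrite leq_mul2r jg orbT.
  move: H1; rewrite mulSn; lia.
Qed.

End Ultra.

Theorem theorem1p6 (F : realFieldType) (Hdp : dp_small_Th F) :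
  forall (x : F), 0 < x -> forall n : nat, (0 < n)%N -> exists y : F, y ^+ n = x.
Proof.
move=> x x0 n n0.
case: (pselect (exists y : F, y ^+ n = x)) => // Hno; exfalso.
have Hno' : forall y : F, y ^+ n != x.
  by move=> y; apply/eqP => E; apply: Hno; exists y.
have n1 : (1 < n)%N.
  case: n n0 Hno {Hno'} => [|[|n]] // _ []; exists x; exact: expr1.
have [U [UU sub]] := ultraFilterLemma (@eventually_filter).
have Hmod : @models_Th F (Mst F U) (mk U (fun _ : nat => 0 : F)).
  move=> f _; rewrite (los UU f (fun _ _ => 0)).
  split=> H; first by apply: filterS filterT => N.
  case: (pselect (sat (M := struct_of F) (fun _ => 0) f)) => // nH; exfalso.
  apply: (@filter_not_empty _ U); apply: filterS H => N /= H; exact: nH H.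
have [x1|x1|x1] := ltgtP x 1.
- apply: (Hdp _ _ Hmod); apply: (config UU (c := x^-1) (n := n)) => //.
    by rewrite invf_gt1.
  move=> y; apply/eqP => E; apply: Hno; exists y^-1. by rewrite exprVn E invrK.
- exact: (Hdp _ _ Hmod (config UU x1 n1 Hno' sub)).
- by apply: Hno; exists 1; rewrite x1 expr1n.
Qed.
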